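(* Let $p,q\geq1$ be integers and let $\gamma(s)=(x(s),y(s))$ be a smooth curve with $x,y>0$, parametrized by arc length, with $\dot x=\cos\alpha$, $\dot y=\sin\alpha$ for a smooth function $\alpha(s)$, satisfying $$3\dot\alpha+p\,\frac{\sin\alpha}{x}-q\,\frac{\cos\alpha}{y}=0.$$ Let $I=y^{q/3}\cos\alpha$ and $J=x^{p/3}\sin\alpha$. Then $I$ and $J$ are increasing along such solutions. *)

(* Defs.v *)
From Stdlib Require Import Reals.
From Coquelicot Require Import Coquelicot.
Open Scope R_scope.

Definition in_interval (a b : Rbar) (s : R) : Prop :=
  Rbar_lt a s /\ Rbar_lt s b.

Definition smooth_on (a b : Rbar) (f : R -> R) : Prop :=
  forall (n : nat) (s : R), in_interval a b s -> ex_derive_n f n s.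

Definition I_inv (q : nat) (y alpha : R -> R) (s : R) : R :=
  Rpower (y s) (INR q / 3) * cos (alpha s).
Definition J_inv (p : nat) (x alpha : R -> R) (s : R) : R :=
  Rpower (x s) (INR p / 3) * sin (alpha s).

(* Main.v *)
Require Import Defs.
From Stdlib Require Import Reals Lra.
From Coquelicot Require Import Coquelicot.
Open Scope R_scope.

Lemma interval_between (a b : Rbar) s t u :
  in_interval a b s -> in_interval a b t -> s <= u <= t -> in_interval a b u.
Proof.
  intros [H1 H2] [H3 H4] [H5 H6]; split.
  - eapply Rbar_lt_le_trans; [exact H1| simpl; lra].
  - eapply Rbar_le_lt_trans; [| exact H4]; simpl; lra.
Qed.

Lemma incr_lemma (a b : Rbar) (f df : R -> R) :
  (forall u, in_interval a b u -> is_derive f u (df u) /\ 0 <= df u) ->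
  forall s t, in_interval a b s -> in_interval a b t -> s <= t -> f s <= f t.
Proof.
  intros H s t Hs Ht Hst.
  destruct (MVT_gen f s t df) as [c [Hc Heq]].
  - intros u Hu. rewrite Rmin_left in Hu by lra. rewrite Rmax_right in Hu by lra.
    apply H. apply (interval_between a b s t); auto; lra.
  - intros u Hu. rewrite Rmin_left in Hu by lra. rewrite Rmax_right in Hu by lra.
    apply continuity_pt_filterlim. apply (ex_derive_continuous f).
    eexists. apply H. apply (interval_between a b s t); auto; lra.
  - rewrite Rmin_left in Hc by lra. rewrite Rmax_right in Hc by lra.
    assert (0 <= df c) by (apply H; apply (interval_between a b s t); auto; lra).
    assert (0 <= df c * (t - s)) by (apply Rmult_le_pos; lra). lra.
Qed.

Lemma deriv_rpow (g : R -> R) c u dg :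
  0 < g u -> is_derive g u dg ->
  is_derive (fun v => Rpower (g v) c) u (Rpower (g u) c * (c * (dg / g u))).
Proof.
  intros Hp Hd. unfold Rpower.
  assert (H1 : is_derive (fun v => c * ln (g v)) u (c * (dg * / g u))).
  { apply is_derive_scal.
    pose proof (is_derive_comp ln g u (/ g u) dg (is_derive_ln _ Hp) Hd) as K.
    exact K. }
  pose proof (is_derive_comp exp (fun v => c * ln (g v)) u _ _ (is_derive_exp _) H1) as K.
  eapply is_derive_ext; [ intros; reflexivity |].
  replace (exp (c * ln (g u)) * (c * (dg / g u))) with (scal (c * (dg * / g u)) (exp (c * ln (g u)))).
  exact K. unfold scal; simpl; unfold mult; simpl. unfold Rdiv; ring.
Qed.

Theorem lemma4p3 (p q : nat) (a b : Rbar) (x y alpha : R -> R) :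
  (1 <= p)%nat -> (1 <= q)%nat ->
  smooth_on a b x -> smooth_on a b y -> smooth_on a b alpha ->
  (forall s, in_interval a b s -> 0 < x s /\ 0 < y s) ->
  (forall s, in_interval a b s -> is_derive x s (cos (alpha s))) ->
  (forall s, in_interval a b s -> is_derive y s (sin (alpha s))) ->
  (forall s, in_interval a b s ->
     3 * Derive alpha s + INR p * sin (alpha s) / x s
       - INR q * cos (alpha s) / y s = 0) ->
  forall s t, in_interval a b s -> in_interval a b t -> s <= t ->
    I_inv q y alpha s <= I_inv q y alpha t /\
    J_inv p x alpha s <= J_inv p x alpha t.
Proof.
  intros Hp Hq _ _ Sa Hpos Dx Dy Eq s t Hs Ht Hst.
  assert (Da : forall u, in_interval a b u -> is_derive alpha u (Derive alpha u)).
  { intros u Hu. apply Derive_correct. exact (Sa 1%nat u Hu). }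
  assert (Hpr : 0 <= INR p) by apply pos_INR.
  assert (Hqr : 0 <= INR q) by apply pos_INR.
  split.
  - apply (incr_lemma a b _ (fun u => INR p * Rpower (y u) (INR q / 3) * sin (alpha u) ^ 2 / (3 * x u))); auto.
    intros u Hu. destruct (Hpos u Hu) as [Hx Hy]. split.
    + unfold I_inv.
      pose proof (deriv_rpow y (INR q / 3) u _ Hy (Dy u Hu)) as K1.
      pose proof (is_derive_comp cos alpha u _ _ (is_derive_cos _) (Da u Hu)) as K2.
      pose proof (is_derive_mult _ _ u _ _ K1 K2 ltac:(intros; apply Rmult_comm)) as K.
      eapply is_derive_ext; [intros; reflexivity|].
      refine (eq_ind _ (fun d => is_derive _ u d) K _ _).
      simpl. unfold plus, mult, scal; simpl. unfold mult; simpl.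
      pose proof (Eq u Hu) as E.
      assert (Derive alpha u = (INR q * cos (alpha u) / y u - INR p * sin (alpha u) / x u)/3) as ->  by lra.
      field. split; lra.
    + apply Rmult_le_pos.
      * apply Rmult_le_pos; [apply Rmult_le_pos; [lra| apply Rlt_le, exp_pos]|]. nra.
      * apply Rlt_le, Rinv_0_lt_compat; lra.
  - apply (incr_lemma a b _ (fun u => INR q * Rpower (x u) (INR p / 3) * cos (alpha u) ^ 2 / (3 * y u))); auto.
    intros u Hu. destruct (Hpos u Hu) as [Hx Hy]. split.
    + unfold J_inv.
      pose proof (deriv_rpow x (INR p / 3) u _ Hx (Dx u Hu)) as K1.
      pose proof (is_derive_comp sin alpha u _ _ (is_derive_sin _) (Da u Hu)) as K2.
      pose proof (is_derive_mult _ _ u _ _ K1 K2 ltac:(intros; apply Rmult_comm)) as K.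
      eapply is_derive_ext; [intros; reflexivity|].
      refine (eq_ind _ (fun d => is_derive _ u d) K _ _).
      simpl. unfold plus, mult, scal; simpl. unfold mult; simpl.
      pose proof (Eq u Hu) as E.
      assert (Derive alpha u = (INR q * cos (alpha u) / y u - INR p * sin (alpha u) / x u)/3) as ->  by lra.
      field. split; lra.
    + apply Rmult_le_pos.
      * apply Rmult_le_pos; [apply Rmult_le_pos; [lra| apply Rlt_le, exp_pos]|]. nra.
      * apply Rlt_le, Rinv_0_lt_compat; lra.
Qed.
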